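(* Let $\Omega\subset\mathbb R^n$ be a bounded domain, $\alpha<0$, and $\varphi:\partial\Omega\to\mathbb R$ positive. Then there is at most one positive solution $u\in C^2(\Omega)\cap C^0(\overline\Omega)$ of $$\mathrm{div}\left(\frac{Du}{\sqrt{1-|Du|^2}}\right)=\frac{\alpha}{u\sqrt{1-|Du|^2}}\ \text{ in }\Omega,\qquad u=\varphi\ \text{ on }\partial\Omega,\qquad |Du|<1\ \text{ in }\overline\Omega.$$ *)

(* Defs.v *)
From HB Require Import structures.
From mathcomp Require Import all_boot all_order all_algebra.
From mathcomp Require Import all_classical all_reals all_analysis.
Set Implicit Arguments. Unset Strict Implicit. Unset Printing Implicit Defensive.
Import Order.TTheory GRing.Theory Num.Theory.
Import numFieldNormedType.Exports.
Local Open Scope classical_set_scope.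
Local Open Scope ring_scope.

Definition partial (R : realType) (n : nat) (i : 'I_n)
  (f : 'rV[R]_n -> R) (x : 'rV[R]_n) : R :=
  'D_(delta_mx 0 i) f x.

Definition grad_norm2 (R : realType) (n : nat) (f : 'rV[R]_n -> R)
  (x : 'rV[R]_n) : R :=
  \sum_(i < n) (partial i f x) ^+ 2.

Definition C2_on (R : realType) (n : nat) (O : set 'rV[R]_n)
  (f : 'rV[R]_n -> R) : Prop :=
  forall x, O x ->
    [/\ differentiable f x,
        (forall i : 'I_n, differentiable (partial i f) x) &
        (forall i j : 'I_n, {for x, continuous (partial j (partial i f))})].

Definition divergence (R : realType) (n : nat) (V : 'I_n -> 'rV[R]_n -> R)
  (x : 'rV[R]_n) : R :=
  \sum_(i < n) partial i (V i) x.

Definition lm_operator (R : realType) (n : nat) (u : 'rV[R]_n -> R)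
  (x : 'rV[R]_n) : R :=
  divergence (fun i y => partial i u y / Num.sqrt (1 - grad_norm2 u y)) x.

Definition bdry (R : realType) (n : nat) (O : set 'rV[R]_n) : set 'rV[R]_n :=
  closure O `\` interior O.

Definition is_positive_solution (R : realType) (n : nat) (O : set 'rV[R]_n)
  (alpha : R) (phi : 'rV[R]_n -> R) (u : 'rV[R]_n -> R) : Prop :=
  [/\ C2_on O u /\ {within closure O, continuous u},
      (forall x, closure O x -> 0 < u x),
      (forall x, O x ->
         lm_operator u x = alpha / (u x * Num.sqrt (1 - grad_norm2 u x))),
      (forall x, bdry O x -> u x = phi x) &
      (exists theta : R, theta < 1 /\
         forall x, O x -> Num.sqrt (grad_norm2 u x) <= theta)].

(* Main.v *)
Require Import Defs.
From HB Require Import structures.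
From mathcomp Require Import all_boot all_order all_algebra.
From mathcomp Require Import all_classical all_reals all_analysis.
Import Order.TTheory GRing.Theory Num.Theory.
Import numFieldNormedType.Exports.
Local Open Scope classical_set_scope.
Local Open Scope ring_scope.
From mathcomp Require Import ring lra.
Section S.
Variable R : realType.
Variable V : normedModType R.

Lemma line_quot (f : V -> R) x v t :
  (fun h : R => h^-1 *: (((fun s : R => f (s *: v + x)) \o shift t) (h *: 1)
      - (fun s : R => f (s *: v + x)) t)) =
  (fun h : R => h^-1 *: ((f \o shift (t *: v + x)) (h *: v) - f (t *: v + x))).
Proof.
apply/funext => h /=.
by rewrite /= [h *: 1]mulr1 scalerDl addrA.
Qed.

Lemma derive_line (f : V -> R) x v t :
  'D_1 (fun s : R => f (s *: v + x)) t = 'D_v f (t *: v + x).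
Proof. by rewrite /derive line_quot. Qed.

Lemma derivable_line (f : V -> R) x v t :
  derivable (fun s : R => f (s *: v + x)) t 1 <-> derivable f (t *: v + x) v.
Proof. by rewrite /derivable line_quot. Qed.

Lemma line_in_open (O : set V) x v : open O -> O x ->
  exists2 d : R, 0 < d & forall t : R, `|t| < d -> O (t *: v + x).
Proof.
move=> Oo Ox; have : nbhs x O by apply: open_nbhs_nbhs; split.
move=> /nbhs_ballP[e e0 He].
exists (e / (`|v| + 1)); first by rewrite divr_gt0 // ltr_wpDl.
move=> t Ht; apply: He; rewrite -ball_normE /= opprD addrCA subrr addr0 normrN normrZ.
rewrite ltr_pdivlMr ?ltr_wpDl // in Ht.
apply: le_lt_trans Ht; apply: ler_wpM2l => //; rewrite lerDl //.
Qed.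

End S.
Section S2.
Variable R : realType.
Variable V : normedModType R.

Lemma second_order (w D : V -> R) (O : set V) x v :
  open O -> O x -> (forall y, O y -> w y <= w x) ->
  (forall y, O y -> derivable w y v) -> (forall y, O y -> 'D_v w y = D y) ->
  derivable (fun t : R => D (t *: v + x)) 0 1 ->
  D x = 0 /\ 'D_1 (fun t : R => D (t *: v + x)) 0 <= 0.
Proof.
move=> Oo Ox wmax wder wD Kder.
have [d d0 Hd] := @line_in_open R V O x v Oo Ox.
pose g := fun t : R => w (t *: v + x).
pose K := fun t : R => D (t *: v + x).
have gder : forall t : R, `|t| < d -> is_derive t (1:R) g (K t).
  move=> t /Hd Ot; apply: DeriveDef; first exact/derivable_line/wder.
  by rewrite /g derive_line wD.
have itv t : t \in `]-d, d[%R -> `|t| < d by rewrite in_itv /= ltr_norml.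
have x0 : 0 *: v + x = x by rewrite scale0r add0r.
have D0 : D x = 0.
  have : is_derive (0:R) (1:R) g 0.
    apply: (@derive1_at_max _ g (-d) d 0).
    - by rewrite (le_trans _ (ltW d0)) // oppr_le0 ltW.
    - by move=> t /itv /gder [].
    - by rewrite in_itv /= oppr_lt0 d0.
    - by move=> t /itv /Hd Ot; rewrite /g x0; apply: wmax.
  move=> /(@derive_val _ _ _ _ _ _ _) g0.
  have := @derive_val _ _ _ _ _ _ _ (gder 0 _).
  by rewrite normr0 g0 /K x0 => ->.
split => //.
rewrite leNgt; apply/negP => q0.
have := Kder => /cvgr_gt /(_ _ q0) [e /= e0 He].
pose h := Num.min e d / 2.
have h0 : 0 < h by rewrite divr_gt0 // lt_min e0 d0.
have m0 : 0 < Num.min e d by rewrite lt_min e0 d0.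
have hm : h < Num.min e d by rewrite /h ltr_pdivrMr // ltr_pMr // ltr1n.
have hd : h < d by rewrite (lt_le_trans hm) // ge_min lexx orbT.
have he : h < e by rewrite (lt_le_trans hm) // ge_min lexx.
have Kpos c : 0 < c -> c < e -> 0 < K c.
  move=> c0 ce.
  have : 0 < c^-1 *: ((K \o shift 0) (c *: 1) - K 0).
    apply: He; last by rewrite gt_eqF.
    by rewrite /ball /= sub0r normrN gtr0_norm.
  by rewrite /= [c *: 1]mulr1 addr0 /K x0 D0 subr0 pmulr_rgt0 // invr_gt0.
have [c cin] : exists2 c, c \in `]0, h[%R & g h - g 0 = K c * (h - 0).
  apply: MVT => //.
    move=> t; rewrite in_itv /= => /andP[t0 th]; apply: gder.
    by rewrite gtr0_norm // (lt_trans th hd).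
  apply: continuous_in_subspaceT => t; rewrite inE /= in_itv /= => /andP[t0 th].
  have /gder [/derivable1_diffP /differentiable_continuous] : `|t| < d.
    by rewrite ger0_norm // (le_lt_trans th hd).
  by [].
move: cin; rewrite in_itv /= => /andP[c0 ch].
have := Kpos c c0 (lt_trans ch he).
have : g h <= g 0.
  rewrite /g x0; apply: wmax; apply: Hd; by rewrite gtr0_norm.
move=> gle Kc; rewrite subr0 => E.
have : 0 < g h - g 0 by rewrite E mulr_gt0.
by rewrite subr_gt0 ltNge gle.
Qed.
End S2.
Section S3.
Variable R : realType.
Variable V : normedModType R.

Lemma derive_comp1 (f : V -> R) (g : R -> R) x v dg :
  derivable f x v -> is_derive (f x) (1:R) g dg ->
  derivable (g \o f) x v /\ 'D_v (g \o f) x = dg * 'D_v f x.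
Proof.
move=> fd [gd gD].
have x0 : 0 *: v + x = x by rewrite scale0r add0r.
pose F := fun s : R => f (s *: v + x).
have F0 : F 0 = f x by rewrite /F x0.
have Fd : derivable F 0 1 by apply/derivable_line; rewrite x0.
have gd' : derivable g (F 0) 1 by rewrite F0.
have GFd : derivable (g \o F) 0 1.
  apply/derivable1_diffP; apply: differentiable_comp.
    exact/derivable1_diffP.
  exact/derivable1_diffP.
split.
  by rewrite -x0; apply/(derivable_line _ _ (g \o f) x v 0).
have E1 := derive_line _ _ (g \o f) x v 0; rewrite x0 in E1.
have E2 := derive_line _ _ f x v 0; rewrite x0 in E2.
rewrite -E1 -E2 -!derive1E.
have -> : (fun s : R => (g \o f) (s *: v + x)) = g \o F by [].
by rewrite derive1_comp // derive1E F0 gD.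
Qed.
End S3.


Section S4.
Variable R : realType.
Variable n : nat.

Lemma dir_decomp (f : 'rV[R]_n -> R) x v : differentiable f x ->
  'D_v f x = \sum_(j < n) v 0 j * partial j f x.
Proof.
move=> fd; rewrite deriveE // {1}(row_sum_delta v) linear_sum.
by apply: eq_bigr => j _; rewrite linearZ /= -deriveE.
Qed.
End S4.
Section S5.
Variable R : realType.
Variable n : nat.

Lemma alg_id (a s p W : R) : W != 0 ->
  p * (- W ^- 2 * ((2 * W)^-1 * - (2 * s))) + W^-1 * a = a / W + p * s / W ^+ 3.
Proof. by move=> W0; field; rewrite W0. Qed.

Lemma partial_T (u : 'rV[R]_n -> R) x i :
  (forall j, differentiable (partial j u) x) -> grad_norm2 u x < 1 ->
  partial i (fun y => partial i u y / Num.sqrt (1 - grad_norm2 u y)) x =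
  partial i (partial i u) x / Num.sqrt (1 - grad_norm2 u x) +
  partial i u x * (\sum_(j < n) partial j u x * partial i (partial j u) x)
    / (Num.sqrt (1 - grad_norm2 u x)) ^+ 3.
Proof.
move=> pd gn1.
set e := delta_mx 0 i : 'rV[R]_n.
have pder j : derivable (partial j u) x e by exact: diff_derivable.
have gnE : grad_norm2 u = \sum_(j < n) (partial j u) ^+ 2.
  by rewrite fct_sumE; apply/funext => y; apply: eq_bigr => j _; rewrite exprfctE.
have gnder : derivable (grad_norm2 u) x e.
  by rewrite gnE; apply: derivable_sum => j; apply: derivableX.
have gnD : 'D_e (grad_norm2 u) x =
    2 * \sum_(j < n) partial j u x * partial i (partial j u) x.
  rewrite gnE derive_sum; last by move=> j; apply: derivableX.
  rewrite big_distrr; apply: eq_bigr => j _; rewrite deriveX // /partial -/e.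
  by rewrite expr1 /= mulrA.
pose S := fun y => 1 - grad_norm2 u y.
have SE : S = cst 1 - grad_norm2 u by [].
have Sder : derivable S x e by rewrite SE; apply: derivableB.
have SD : 'D_e S x = - 'D_e (grad_norm2 u) x.
  by rewrite SE deriveB // derive_cst sub0r.
have S0 : 0 < S x by rewrite /S subr_gt0.
have [Qder QD] := @derive_comp1 R _ S Num.sqrt x e _ Sder (is_derive1_sqrt S0).
set W := Num.sqrt (S x).
have W0 : 0 < W by rewrite sqrtr_gt0.
have Qx : (Num.sqrt \o S) x != 0 by rewrite /= gt_eqF.
have IE : (fun y => partial i u y / Num.sqrt (1 - grad_norm2 u y)) =
   partial i u * (fun y => ((Num.sqrt \o S) y)^-1) by [].
rewrite /partial -/e IE deriveM //; last exact: derivableV.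
rewrite deriveV // QD SD gnD /= -/W -/e.
set s := \sum_(j < n) _.
set a := 'D_e (partial i u) x.
rewrite /W /S; set W' := Num.sqrt _.
have W'0 : W' != 0 by rewrite gt_eqF.
rewrite /GRing.scale /=.
exact: alg_id.
Qed.
End S5.
Section S6.
Variable R : realType.
Variable n : nat.
Implicit Types u : 'rV[R]_n -> R.

Lemma bounded_closure (A : set 'rV[R]_n) : bounded_set A -> bounded_set (closure A).
Proof.
rewrite /= /bounded_near => Ab; apply: filterS Ab => M HM y cy.
have cl : closed (closed_ball_ Num.norm (0 : 'rV[R]_n) M) by exact: closed_closed_ball_.
have sub : A `<=` closed_ball_ Num.norm (0 : 'rV[R]_n) M.
  by move=> z Az; rewrite /closed_ball_ /= sub0r normrN; apply: HM.
by have := closureS sub cy; rewrite -(closure_id _).1 // /closed_ball_ /= sub0r normrN.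
Qed.

Lemma within_contB (A : set 'rV[R]_n) u1 u2 :
  {within A, continuous u1} -> {within A, continuous u2} ->
  {within A, continuous (fun y => u1 y - u2 y)}.
Proof. by move=> c1 c2 y; apply: cvgB; [exact: c1|exact: c2]. Qed.

End S6.
Section S7.
Variable R : realType.
Variable n : nat.
Implicit Types u : 'rV[R]_n -> R.

Lemma sum_delta (k : 'I_n) (F : 'I_n -> R) :
  \sum_(j < n) (delta_mx 0 k : 'rV[R]_n) 0 j * F j = F k.
Proof.
rewrite (bigD1 k) //= big1 => [|j /negbTE jk]; first by rewrite mxE !eqxx mul1r addr0.
by rewrite mxE jk andbF mul0r.
Qed.

Lemma at_max (O : set 'rV[R]_n) u1 u2 xm : open O -> O xm ->
  (forall y, O y -> u1 y - u2 y <= u1 xm - u2 xm) ->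
  (forall y, O y -> differentiable u1 y) ->
  (forall y, O y -> differentiable u2 y) ->
  (forall j, differentiable (partial j u1) xm) ->
  (forall j, differentiable (partial j u2) xm) ->
  (forall j, partial j u1 xm = partial j u2 xm) /\
  (forall v : 'rV[R]_n, \sum_(j < n) v 0 j * \sum_(i < n) v 0 i *
     (partial i (partial j u1) xm - partial i (partial j u2) xm) <= 0).
Proof.
move=> Oo Oxm wmax d1 d2 pd1 pd2.
pose Dv (v : 'rV[R]_n) :=
  \sum_(j < n) (fun y => v 0 j * (partial j u1 y - partial j u2 y)).
have DvE v y : Dv v y = \sum_(j < n) v 0 j * (partial j u1 y - partial j u2 y).
  by rewrite /Dv fct_sumE.
have x0 v : 0 *: v + xm = xm by rewrite scale0r add0r.
have termE v j : (fun y => v 0 j * (partial j u1 y - partial j u2 y)) =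
   cst (v 0 j) * (partial j u1 - partial j u2) by [].
have Dder v : derivable (Dv v) xm v.
  apply: derivable_sum => j; rewrite termE; apply: derivableM => //.
  by apply: derivableB; apply: diff_derivable.
have key v := @second_order R _ (fun y => u1 y - u2 y) (Dv v) O xm v Oo Oxm wmax.
have wder v y : O y -> derivable (fun y => u1 y - u2 y) y v.
  by move=> Oy; apply: (@derivableB _ _ _ u1 u2); apply: diff_derivable; auto.
have wD v y : O y -> 'D_v (fun y => u1 y - u2 y) y = Dv v y.
  move=> Oy; rewrite (@deriveB _ _ _ u1 u2); try by apply: diff_derivable; auto.
  rewrite DvE !dir_decomp; auto.
  by rewrite -sumrB; apply: eq_bigr => j _; rewrite mulrBr.
have Kder v : derivable (fun t : R => Dv v (t *: v + xm)) 0 1.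
  by apply/derivable_line; rewrite x0.
have K v := key v (wder v) (wD v) (Kder v).
split.
  move=> k; have [+ _] := K (delta_mx 0 k).
  by rewrite DvE sum_delta => /eqP; rewrite subr_eq0 => /eqP.
move=> v; have [_] := K v.
rewrite derive_line x0 /Dv derive_sum; last first.
  move=> j; rewrite termE; apply: derivableM => //.
  by apply: derivableB; apply: diff_derivable.
congr (_ <= _); apply: eq_bigr => j _.
rewrite termE deriveM //; last by apply: derivableB; apply: diff_derivable.
rewrite derive_cst scaler0 addr0 (@deriveB _ _ _ (partial j u1) (partial j u2));
  try by apply: diff_derivable.
rewrite !dir_decomp //; congr (_ * _).
by rewrite -sumrB; apply: eq_bigr => i _; rewrite mulrBr.
Qed.

End S7.
Section S9.
Variable R : realType.
Variable n : nat.

Lemma quad_le (H : 'I_n -> 'I_n -> R) (p : 'I_n -> R) :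
  (forall v : 'rV[R]_n, \sum_(j < n) v 0 j * \sum_(i < n) v 0 i * H i j <= 0) ->
  (\sum_(i < n) p i * \sum_(j < n) p j * H i j <= 0) /\ (forall i, H i i <= 0).
Proof.
move=> Hle; split; last first.
  by move=> i; have := Hle (delta_mx 0 i); rewrite sum_delta sum_delta.
have := Hle (\row_j p j).
have -> : \sum_(j < n) (\row_j p j : 'rV[R]_n) 0 j *
    \sum_(i < n) (\row_j p j : 'rV[R]_n) 0 i * H i j =
  \sum_(j < n) \sum_(i < n) p j * (p i * H i j).
  by apply: eq_bigr => j _; rewrite mxE big_distrr; apply: eq_bigr => i _; rewrite mxE.
have -> : \sum_(i < n) p i * \sum_(j < n) p j * H i j =
  \sum_(j < n) \sum_(i < n) p j * (p i * H i j).
  rewrite exchange_big /=; apply: eq_bigr => j _; rewrite big_distrr /=.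
  by apply: eq_bigr => i _; rewrite mulrCA.
by [].
Qed.

Lemma final_ineq (alpha a b W : R) : alpha < 0 -> 0 < b -> b < a -> 0 < W ->
  alpha / (b * W) < alpha / (a * W).
Proof.
move=> al b0 ba W0.
have a0 : 0 < a by exact: lt_trans b0 ba.
rewrite ltr_nM2l // ltf_pV2 ?posrE ?mulr_gt0 //.
by rewrite ltr_pM2r.
Qed.
End S9.
Lemma le_sol (R : realType) (n : nat) (Omega : set 'rV[R]_n)
  (alpha : R) (phi : 'rV[R]_n -> R) :
  open Omega -> bounded_set Omega -> alpha < 0 ->
  forall u1 u2, is_positive_solution Omega alpha phi u1 ->
  is_positive_solution Omega alpha phi u2 ->
  forall x, closure Omega x -> u1 x <= u2 x.
Proof.
move=> Oo Ob al u1 u2 [[C1 c1] pos1 eq1 bd1 [t1 [t1lt t1b]]]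
  [[C2 c2] pos2 eq2 bd2 _] x0 cx0.
rewrite leNgt; apply/negP => lt0.
pose w := fun y => u1 y - u2 y.
have cw := @within_contB _ _ _ _ _ c1 c2.
have cK : compact (closure Omega).
  exact: bounded_closed_compact (@bounded_closure _ _ _ Ob) (@closed_closure _ _).
have [xm xmin xmax] := EVT_max_rV (ex_intro _ x0 cx0) cK cw.
rewrite inE in xmin.
have wx0 : 0 < w x0 by rewrite /w subr_gt0.
have wxm : 0 < w xm := lt_le_trans wx0 (xmax _ (mem_set cx0)).
have Oxm : Omega xm.
  apply: contrapT => nO.
  have bd : bdry Omega xm by split => // /interior_subset.
  by move: wxm; rewrite /w bd1 // bd2 // subrr ltxx.
have [gE Hle] := @at_max _ _ Omega u1 u2 xm Oo Oxm
  (fun y Oy => xmax y (mem_set (subset_closure Oy)))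
  (fun y Oy => let: And3 a _ _ := C1 y Oy in a)
  (fun y Oy => let: And3 a _ _ := C2 y Oy in a)
  (let: And3 _ b _ := C1 xm Oxm in b)
  (let: And3 _ b _ := C2 xm Oxm in b).
have gn1 : grad_norm2 u1 xm < 1.
  have gn0 : 0 <= grad_norm2 u1 xm by apply: sumr_ge0 => i _; exact: sqr_ge0.
  have h := le_lt_trans (t1b _ Oxm) t1lt.
  by move: h; rewrite -[X in _ < X]sqrtr1 ltr_sqrt.
have gnE : grad_norm2 u2 xm = grad_norm2 u1 xm.
  by apply: eq_bigr => i _; rewrite gE.
have gn2 : grad_norm2 u2 xm < 1 by rewrite gnE.
set W := Num.sqrt (1 - grad_norm2 u1 xm).
have W0 : 0 < W by rewrite sqrtr_gt0 subr_gt0.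
have L1 : lm_operator u1 xm = \sum_(i < n) (
  partial i (partial i u1) xm / W +
  partial i u1 xm * (\sum_(j < n) partial j u1 xm * partial i (partial j u1) xm)
    / W ^+ 3).
  rewrite /lm_operator /divergence; apply: eq_bigr => i _; rewrite partial_T //.
  by case: (C1 xm Oxm).
have L2 : lm_operator u2 xm = \sum_(i < n) (
  partial i (partial i u2) xm / W +
  partial i u1 xm * (\sum_(j < n) partial j u1 xm * partial i (partial j u2) xm)
    / W ^+ 3).
  rewrite /lm_operator /divergence; apply: eq_bigr => i _; rewrite partial_T //.
    rewrite gnE gE -/W; congr (_ + _ * _ / _).
    by apply: eq_bigr => j _; rewrite gE.
  by case: (C2 xm Oxm).
pose H i j := partial i (partial j u1) xm - partial i (partial j u2) xm.
pose p j := partial j u1 xm.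
have diffE : lm_operator u1 xm - lm_operator u2 xm =
  (\sum_(i < n) H i i) / W +
  (\sum_(i < n) p i * \sum_(j < n) p j * H i j) / W ^+ 3.
  rewrite L1 L2 -sumrB !mulr_suml -big_split; apply: eq_bigr => i _ /=.
  have -> : \sum_(j < n) p j * H i j =
     \sum_(j < n) partial j u1 xm * partial i (partial j u1) xm -
     \sum_(j < n) partial j u1 xm * partial i (partial j u2) xm.
    by rewrite -sumrB; apply: eq_bigr => j _; rewrite /p /H mulrBr.
  rewrite /H /p; ring.
have [Q1 Q2] := @quad_le _ _ H p Hle.
have diffle : lm_operator u1 xm - lm_operator u2 xm <= 0.
  rewrite diffE; apply: ler_wnDl.
    apply: mulr_le0_ge0; first by apply: sumr_le0 => i _; exact: Q2.
    by rewrite invr_ge0 ltW.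
  apply: mulr_le0_ge0 => //.
  by rewrite invr_ge0 exprn_ge0 // ltW.
move: diffle; rewrite subr_le0 eq1 // eq2 // gnE -/W.
apply/negP; rewrite -ltNge.
have u2p : 0 < u2 xm by apply: pos2; apply: subset_closure.
have u12 : u2 xm < u1 xm by rewrite -subr_gt0.
exact: final_ineq.
Qed.

Theorem proposition4p4 (R : realType) (n : nat) (Omega : set 'rV[R]_n)
  (alpha : R) (phi : 'rV[R]_n -> R)
  (Omega_open : open Omega) (Omega_conn : connected Omega)
  (Omega_neq0 : Omega !=set0) (Omega_bnd : bounded_set Omega)
  (alpha_neg : alpha < 0)
  (phi_pos : forall x, bdry Omega x -> 0 < phi x)
  (u1 u2 : 'rV[R]_n -> R) :
  is_positive_solution Omega alpha phi u1 ->
  is_positive_solution Omega alpha phi u2 ->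
  forall x, closure Omega x -> u1 x = u2 x.
Proof.
move=> s1 s2 x cx; apply/eqP; rewrite eq_le.
by rewrite (@le_sol R n Omega alpha phi Omega_open Omega_bnd alpha_neg u1 u2 s1 s2 x cx)
  (@le_sol R n Omega alpha phi Omega_open Omega_bnd alpha_neg u2 u1 s2 s1 x cx).
Qed.
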